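(* Let $m\ge1$, $0<\lambda_1\le\dots\le\lambda_m$, $0<\Lambda_0\le\Lambda_1$, and let $a,b$ be positive definite (symmetric) $m\times m$ matrices with $\Lambda_0I\le a,b\le\Lambda_1I$. Then for all $t>0$ and $w,w'\in\mathbb{R}^m$: $\|\widetilde a(t)-\widetilde b(t)\|\le\|\widetilde a(t)-\widetilde b(t)\|_s\le\|a-b\|_s$; $\|\widetilde A(t)-\widetilde B(t)\|\le\Lambda_0^{-2}\|a-b\|_s$; $|\langle w,(\widetilde A(t)-\widetilde B(t))w'\rangle|\le\Lambda_0^{-2}\|w\|\,\|w'\|\,\|a-b\|_s$.
   Context: $a(t)$ has entries $a_{ij}(1-e^{-(\lambda_i+\lambda_j)t})/(\lambda_i+\lambda_j)$; $g(t)$ is diagonal with $g_{ii}(t)=(1-e^{-2\lambda_it})/(2\lambda_i)$, $G(t)=g(t)^{-1}$; $\widetilde a(t)=G(t)^{1/2}a(t)G(t)^{1/2}$, $\widetilde A(t)=\widetilde a(t)^{-1}$; $b(t),\widetilde b(t),\widetilde B(t)$ analogously. $\|\cdot\|$ is the operator norm; $\|c\|_s=\max\{\sup_i\sum_j|c_{ij}|,\sup_j\sum_i|c_{ij}|\}$. *)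

(* Defs.v *)
From HB Require Import structures.
From mathcomp Require Import all_boot all_order all_algebra.
From mathcomp Require Import all_classical all_reals all_analysis.
Set Implicit Arguments. Unset Strict Implicit. Unset Printing Implicit Defensive.
Import Order.TTheory GRing.Theory Num.Theory.
Local Open Scope ring_scope.
Local Open Scope classical_set_scope.

Section Defs.
Variables (R : realType) (m : nat).

Definition enorm (v : 'cV[R]_m) : R := Num.sqrt (\sum_i (v i 0) ^+ 2).

Definition inner (w v : 'cV[R]_m) : R := \sum_i w i 0 * v i 0.

Definition opnorm (c : 'M[R]_m) : R :=
  sup [set enorm (c *m v) | v in [set v : 'cV[R]_m | enorm v <= 1]].

Definition snorm (c : 'M[R]_m) : R :=
  Num.max (\big[Num.max/0]_i \sum_j `|c i j|)
          (\big[Num.max/0]_j \sum_i `|c i j|).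

Definition bounded_spd (L0 L1 : R) (a : 'M[R]_m) : Prop :=
  a^T = a /\
  forall v : 'cV[R]_m,
    L0 * inner v v <= inner v (a *m v) /\ inner v (a *m v) <= L1 * inner v v.

Definition amat (lam : 'I_m -> R) (a : 'M[R]_m) (t : R) : 'M[R]_m :=
  \matrix_(i, j) (a i j * (1 - expR (- (lam i + lam j) * t)) / (lam i + lam j)).

Definition gdiag (lam : 'I_m -> R) (t : R) (i : 'I_m) : R :=
  (1 - expR (- (2 * lam i) * t)) / (2 * lam i).

Definition gmat (lam : 'I_m -> R) (t : R) : 'M[R]_m :=
  diag_mx (\row_i gdiag lam t i).

Definition Gmat (lam : 'I_m -> R) (t : R) : 'M[R]_m := invmx (gmat lam t).

Definition Ghalf (lam : 'I_m -> R) (t : R) : 'M[R]_m :=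
  diag_mx (\row_i Num.sqrt ((gdiag lam t i)^-1)).

Definition atilde (lam : 'I_m -> R) (a : 'M[R]_m) (t : R) : 'M[R]_m :=
  Ghalf lam t *m amat lam a t *m Ghalf lam t.

Definition Atilde (lam : 'I_m -> R) (a : 'M[R]_m) (t : R) : 'M[R]_m :=
  invmx (atilde lam a t).

End Defs.

(* Main.v *)
Require Import Defs.
From HB Require Import structures.
From mathcomp Require Import all_boot all_order all_algebra.
From mathcomp Require Import all_classical all_reals all_analysis.
From mathcomp Require Import ring lra.
Import Order.TTheory GRing.Theory Num.Theory.
Local Open Scope ring_scope.
Section S.
Variable R : realType.
Definition H (c s : R) : R := c^-1 * (1 - expR (- c * s)).

Lemma isd_e (c s : R) : is_derive s 1 (fun u : R => expR (- c * u)) (expR (- c * s) * (- c)).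
Proof.
have h1 : is_derive s 1 (fun u : R => - c * u) (- c).
  have := @is_deriveZ R R R id (- c) s 1 1 (is_derive_id _ _).
  by rewrite /GRing.scale /= mulr1.
exact: (@is_derive1_comp R expR (fun u => - c * u) s _ _ (is_derive_expR _) h1).
Qed.

Lemma isd_H (c s : R) : c != 0 -> is_derive s 1 (H c) (expR (- c * s)).
Proof.
move=> c0.
have h := isd_e c s.
have h2 := is_deriveB (@is_derive_cst R R R (1:R) s 1) h.
have h3 := @is_deriveZ R R R _ (c^-1) s 1 _ h2.
have -> : expR (- c * s) = c^-1 *: (0 - expR (- c * s) * - c).
  rewrite /GRing.scale /=. by field.
exact: h3.
Qed.

Lemma isd_sum n (f : 'I_n -> R -> R) (df : 'I_n -> R) (s : R) :
  (forall i, is_derive s 1 (f i) (df i)) ->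
  is_derive s 1 (fun u => \sum_i f i u) (\sum_i df i).
Proof. by move=> h; have := is_derive_sum h; rewrite fct_sumE. Qed.

Lemma isd_scal (f : R -> R) (k df s : R) :
  is_derive s 1 f df -> is_derive s 1 (fun u => k * f u) (k * df).
Proof. by move=> h; have := @is_deriveZ R R R f k s 1 df h. Qed.

Lemma isd_sub (f g : R -> R) (df dg s : R) :
  is_derive s 1 f df -> is_derive s 1 g dg -> is_derive s 1 (fun u => f u - g u) (df - dg).
Proof. by move=> h1 h2; have := is_deriveB h1 h2. Qed.

Lemma H0 c : H c 0 = 0.
Proof. by rewrite /H mulr0 expR0 subrr mulr0. Qed.

Lemma core n (mu : 'I_n -> R) (A : 'I_n -> 'I_n -> R) (L : R) (x : 'I_n -> R) (t : R) :
  (forall k, 0 < mu k) -> 0 <= t ->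
  (forall y : 'I_n -> R, L * \sum_k y k ^+ 2 <= \sum_k \sum_l y k * y l * A k l) ->
  L * \sum_k x k ^+ 2 * H (mu k + mu k) t <=
    \sum_k \sum_l x k * x l * A k l * H (mu k + mu l) t.
Proof.
move=> mu0 t0 hA.
pose Q := fun u : R => \sum_k \sum_l x k * x l * A k l * H (mu k + mu l) u
                   - L * \sum_k x k ^+ 2 * H (mu k + mu k) u.
pose D := fun u : R => \sum_k \sum_l x k * x l * A k l * expR (- (mu k + mu l) * u)
                   - L * \sum_k x k ^+ 2 * expR (- (mu k + mu k) * u).
have ne : forall k l, mu k + mu l != 0.
  by move=> k l; apply: lt0r_neq0; apply: addr_gt0.
have dQ : forall u : R, is_derive u 1 Q (D u).
  move=> u; apply: isd_sub.
    apply: isd_sum => k; apply: isd_sum => l; apply: isd_scal; exact: isd_H.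
  apply: isd_scal; apply: isd_sum => k; apply: isd_scal; exact: isd_H.
have Dge : forall u : R, 0 <= D u.
  move=> u; rewrite /D subr_ge0.
  have := hA (fun k => x k * expR (- mu k * u)).
  congr (_ * _ <= _).
    apply: eq_bigr => k _; rewrite exprMn -expRM_natl.
    congr (_ * expR _); rewrite mulrDl mulNr; ring.
  apply: eq_bigr => k _; apply: eq_bigr => l _.
  have -> : - (mu k + mu l) * u = - mu k * u + - mu l * u by ring.
  rewrite expRD; ring.
have : Q 0 <= Q t.
  apply: (@ger0_derive1_ndecr R Q 0 t) => //.
  - by move=> u _; rewrite derive1E derive_val.
  - apply: derivable_within_continuous => r _.
    exact: (@ex_derive _ _ _ _ _ _ _ (dQ r)).
rewrite /Q.
have z1 : \sum_k \sum_l x k * x l * A k l * H (mu k + mu l) 0 = 0.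
  by apply: big1 => k _; apply: big1 => l _; rewrite H0 mulr0.
have z2 : \sum_k x k ^+ 2 * H (mu k + mu k) 0 = 0.
  by apply: big1 => k _; rewrite H0 mulr0.
by rewrite z1 z2 mulr0 subr0 subr_ge0.
Qed.
End S.
Section S2.
Variable R : realType.
Variable n : nat.

Lemma dsum (f g : 'I_n -> R) : \sum_j \sum_k f j * g k = (\sum_j f j) * (\sum_k g k).
Proof. rewrite mulr_suml; apply: eq_bigr => j _; by rewrite mulr_sumr. Qed.

Lemma cs (x y : 'I_n -> R) :
  (\sum_j x j * y j) ^+ 2 <= (\sum_j x j ^+ 2) * (\sum_j y j ^+ 2).
Proof.
have e : \sum_j \sum_k (x j * y k - x k * y j) ^+ 2 =
   2 * ((\sum_j x j ^+ 2) * (\sum_j y j ^+ 2) - (\sum_j x j * y j) ^+ 2).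
  have e1 : \sum_j \sum_k (x j * y k - x k * y j) ^+ 2 =
    \sum_j \sum_k (x j ^+ 2 * y k ^+ 2) + \sum_j \sum_k (x k ^+ 2 * y j ^+2)
    - 2 * \sum_j \sum_k ((x j * y j) * (x k * y k)).
    rewrite mulr_sumr -big_split -sumrB; apply: eq_bigr => j _.
    rewrite mulr_sumr -big_split -sumrB; apply: eq_bigr => k _; rewrite /=; ring.
  rewrite e1 !dsum expr2.
  have -> : \sum_j \sum_k x k ^+ 2 * y j ^+ 2 = (\sum_j y j ^+ 2) * (\sum_k x k ^+ 2).
    rewrite -dsum; apply: eq_bigr => j _; apply: eq_bigr => k _; ring.
  ring.
have : 0 <= \sum_j \sum_k (x j * y k - x k * y j) ^+ 2.
  by apply: sumr_ge0 => j _; apply: sumr_ge0 => k _; apply: sqr_ge0.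
rewrite e pmulr_rge0 ?ltr0n // subr_ge0 //.
Qed.

Lemma enorm_sq (v : 'cV[R]_n) : enorm v ^+ 2 = \sum_i v i 0 ^+ 2.
Proof. by rewrite /enorm sqr_sqrtr // sumr_ge0 // => i _; apply: sqr_ge0. Qed.

Lemma enorm_ge0 (v : 'cV[R]_n) : 0 <= enorm v.
Proof. exact: sqrtr_ge0. Qed.

Lemma inner_vv (v : 'cV[R]_n) : inner v v = enorm v ^+ 2.
Proof. by rewrite enorm_sq; apply: eq_bigr => i _; rewrite expr2. Qed.

Lemma abs_le_sq (x y : R) : 0 <= y -> x ^+ 2 <= y ^+ 2 -> `|x| <= y.
Proof.
move=> y0 h; rewrite -sqrtr_sqr -(ger0_norm y0) -sqrtr_sqr ler_sqrt //; exact: sqr_ge0.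
Qed.

Lemma inner_cs (w v : 'cV[R]_n) : `|inner w v| <= enorm w * enorm v.
Proof.
apply: abs_le_sq; first by rewrite mulr_ge0 // enorm_ge0.
by rewrite exprMn !enorm_sq; apply: cs.
Qed.

Lemma wcs (p y : 'I_n -> R) : (forall j, 0 <= p j) ->
  (\sum_j p j * y j) ^+ 2 <= (\sum_j p j) * (\sum_j p j * y j ^+ 2).
Proof.
move=> p0.
have := cs (fun j => Num.sqrt (p j)) (fun j => Num.sqrt (p j) * y j).
have q : forall j, Num.sqrt (p j) ^+ 2 = p j by move=> j; rewrite sqr_sqrtr.
congr (_ <= _ * _).
- congr (_ ^+ 2); apply: eq_bigr => j _; by rewrite mulrA -expr2 q.
- by apply: eq_bigr => j _; rewrite q.
- by apply: eq_bigr => j _; rewrite exprMn q.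
Qed.

Lemma snorm_ge0 (c : 'M[R]_n) : 0 <= snorm c.
Proof.
rewrite /snorm le_max; apply/orP; left.
by apply: bigmax_ge_id.
Qed.

Lemma row_le (c : 'M[R]_n) i : \sum_j `|c i j| <= snorm c.
Proof.
rewrite /snorm le_max; apply/orP; left.
exact: le_bigmax.
Qed.

Lemma col_le (c : 'M[R]_n) j : \sum_i `|c i j| <= snorm c.
Proof.
rewrite /snorm le_max; apply/orP; right.
exact: le_bigmax.
Qed.

Lemma schur (c : 'M[R]_n) (v : 'cV[R]_n) : enorm (c *m v) <= snorm c * enorm v.
Proof.
set S := snorm c.
have S0 : 0 <= S := snorm_ge0 c.
have h1 : forall i, ((c *m v) i 0) ^+ 2 <= S * \sum_j `|c i j| * v j 0 ^+ 2.
  move=> i; rewrite mxE.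
  apply: (le_trans (y := (\sum_j `|c i j| * `|v j 0|) ^+ 2)).
    rewrite -real_normK ?num_real //; apply: lerXn2r; rewrite ?nnegrE //.
      by apply: sumr_ge0 => j _; rewrite mulr_ge0.
    apply: (le_trans (ler_norm_sum _ _ _)); apply: ler_sum => j _.
    by rewrite normrM.
  apply: (le_trans (wcs (fun j => `|c i j|) (fun j => `|v j 0|) (fun j => normr_ge0 _))).
  rewrite [X in _ * X <= _](eq_bigr (fun j => `|c i j| * v j 0 ^+ 2)); last by move=> j _; rewrite real_normK ?num_real.
  apply: ler_wpM2r; last exact: row_le.
  by apply: sumr_ge0 => j _; rewrite mulr_ge0 // sqr_ge0.
have h2 : \sum_i ((c *m v) i 0) ^+ 2 <= (S * enorm v) ^+ 2.
  apply: (le_trans (ler_sum _ (fun i _ => h1 i))).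
  rewrite -mulr_sumr exprMn expr2 -mulrA; apply: ler_wpM2l => //.
  rewrite exchange_big /= enorm_sq mulr_sumr; apply: ler_sum => j _.
  rewrite -mulr_suml; apply: ler_wpM2r; first exact: sqr_ge0.
  exact: col_le.
rewrite -(ger0_norm (enorm_ge0 (c *m v))); apply: abs_le_sq.
  by rewrite mulr_ge0 // enorm_ge0.
by rewrite enorm_sq.
Qed.

Lemma inner0 (v : 'cV[R]_n) : inner v 0 = 0.
Proof. by rewrite /inner big1 // => i _; rewrite mxE mulr0. Qed.

Lemma coerc_unit (M : 'M[R]_n) (L : R) : 0 < L ->
  (forall v, L * inner v v <= inner v (M *m v)) -> M \in unitmx.
Proof.
move=> L0 hM.
rewrite -unitmx_tr -row_free_unit -kermx_eq0; apply/eqP/row_matrixP => i.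
rewrite row0.
set r := row i (kermx M^T).
have hr : r *m M^T = 0 by apply/sub_kermxP; exact: row_sub.
have hv : M *m r^T = 0 by rewrite -[M]trmxK -trmx_mul hr trmx0.
have := hM r^T; rewrite hv inner0 inner_vv.
move=> h.
have e0 : enorm r^T ^+ 2 = 0.
  apply/eqP; rewrite eq_le; apply/andP; split; last exact: sqr_ge0.
  by rewrite -(pmulr_rle0 _ L0).
apply/rowP => j; rewrite mxE.
move: e0; rewrite enorm_sq => /eqP; rewrite psumr_eq0 => [/allP h2|k _]; last exact: sqr_ge0.
have := h2 j (mem_index_enum j); rewrite !mxE sqrf_eq0 => /eqP //.
Qed.

Lemma coerc_inv (M : 'M[R]_n) (L : R) (u : 'cV[R]_n) : 0 < L ->
  (forall v, L * inner v v <= inner v (M *m v)) ->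
  enorm (invmx M *m u) <= L^-1 * enorm u.
Proof.
move=> L0 hM.
have Mu := @coerc_unit M L L0 hM.
set x := invmx M *m u.
have hx : M *m x = u by rewrite /x mulmxA mulmxV // mul1mx.
have := hM x; rewrite hx inner_vv => h.
have := inner_cs x u => h2.
have e0 := enorm_ge0 x; have f0 := enorm_ge0 u.
rewrite ler_pdivlMl //.
have h3 : L * enorm x ^+ 2 <= enorm x * enorm u.
  apply: (le_trans h); exact: (le_trans (ler_norm _) h2).
nra.
Qed.

Lemma opnorm_le (c : 'M[R]_n) (B : R) : 0 <= B ->
  (forall v, enorm (c *m v) <= B * enorm v) -> opnorm c <= B.
Proof.
move=> B0 h; apply: ge_sup.
  exists (enorm (c *m 0)); exists 0 => //=.
  by rewrite /enorm big1 ?sqrtr0 // => i _; rewrite mxE expr0n.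
move=> y [v /= hv <-]; apply: (le_trans (h v)).
by rewrite -[X in _ <= X]mulr1 ler_wpM2l.
Qed.

Lemma snorm_mono (c e : 'M[R]_n) : (forall i j, `|c i j| <= `|e i j|) -> snorm c <= snorm e.
Proof.
move=> h; rewrite /snorm ge_max; apply/andP; split.
  apply: bigmax_le; first exact: snorm_ge0.
  move=> i _; apply: (le_trans _ (row_le e i)); apply: ler_sum => j _; exact: h.
apply: bigmax_le; first exact: snorm_ge0.
move=> j _; apply: (le_trans _ (col_le e j)); apply: ler_sum => i _; exact: h.
Qed.
End S2.

Section S3.
Variable R : realType.
Local Notation H := (@H R).

Lemma H_pos (c t : R) : 0 < c -> 0 < t -> 0 < H c t.
Proof.
move=> c0 t0; rewrite /H mulr_gt0 ?invr_gt0 // subr_gt0 expR_lt1.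
by rewrite mulNr oppr_lt0 mulr_gt0.
Qed.

Lemma logcvx (p q t : R) : 0 < p -> 0 < q -> 0 < t ->
  H (p + q) t ^+ 2 <= H (p + p) t * H (q + q) t.
Proof.
move=> p0 q0 t0.
set hpq := H (p + q) t; set hpp := H (p + p) t; set hqq := H (q + q) t.
have hpp0 : 0 < hpp by apply: H_pos => //; apply: addr_gt0.
have hA : forall y : 'I_2 -> R,
    0 * \sum_k y k ^+ 2 <= \sum_k \sum_l y k * y l * (fun _ _ => 1) k l.
  by move=> y; rewrite mul0r; under eq_bigr do under eq_bigr do rewrite mulr1;
     rewrite dsum; exact: sqr_ge0.
have mu0 : forall k : 'I_2, 0 < (if val k == 0%N then p else q) by move=> k; case: ifP.
have h := @core R 2 (fun k => if val k == 0%N then p else q) (fun _ _ => 1) 0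
  (fun k => if val k == 0%N then hpq else - hpp) t
  mu0 (ltW t0) hA.
rewrite !big_ord_recl !big_ord0 /= in h.
have e : H (q + p) t = hpq by rewrite /hpq addrC.
rewrite /bump /= e -/hpp -/hqq in h.
rewrite -/hpq in h.
have : 0 <= hpp * (hpp * hqq - hpq ^+ 2) by nra.
nra.
Qed.
End S3.

Section S4.
Variable R : realType.
Variable m : nat.
Variable lam : 'I_m -> R.
Variable t : R.
Local Notation H := (@H R).
Local Notation s i := (Num.sqrt ((gdiag lam t i)^-1)).

Lemma gd_H i : gdiag lam t i = H (lam i + lam i) t.
Proof. rewrite /gdiag /H; have -> : 2 * lam i = lam i + lam i by ring. by rewrite mulrC. Qed.

Lemma at_entry (a : 'M[R]_m) i j :
  atilde lam a t i j = s i * (a i j * H (lam i + lam j) t) * s j.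
Proof.
rewrite /atilde /Ghalf mul_mx_diag mul_diag_mx !mxE /amat. rewrite /H; ring.
Qed.

Lemma s_sq (lam0 : forall i, 0 < lam i) (t0 : 0 < t) i :
  s i ^+ 2 * H (lam i + lam i) t = 1.
Proof.
have hp : 0 < H (lam i + lam i) t by apply: H_pos => //; apply: addr_gt0.
rewrite sqr_sqrtr ?invr_ge0 ?gd_H ?(ltW hp) // mulVf //; exact: lt0r_neq0.
Qed.

Lemma factor_le1 (lam0 : forall i, 0 < lam i) (t0 : 0 < t) i j :
  0 <= s i * H (lam i + lam j) t * s j <= 1.
Proof.
have hij : 0 < H (lam i + lam j) t by apply: H_pos => //; apply: addr_gt0.
have hii : 0 < H (lam i + lam i) t by apply: H_pos => //; apply: addr_gt0.
have hjj : 0 < H (lam j + lam j) t by apply: H_pos => //; apply: addr_gt0.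
have lc := @logcvx R _ _ _ (lam0 i) (lam0 j) t0.
have si := s_sq lam0 t0 i; have sj := s_sq lam0 t0 j.
have si0 : 0 <= s i := sqrtr_ge0 _; have sj0 : 0 <= s j := sqrtr_ge0 _.
set x := s i * H (lam i + lam j) t * s j.
have x0 : 0 <= x by rewrite /x; apply: mulr_ge0 => //; apply: mulr_ge0 => //; exact: ltW.
have x2 : x ^+ 2 <= 1.
  have -> : x ^+ 2 = (s i ^+ 2 * H (lam i + lam i) t) * (s j ^+ 2 * H (lam j + lam j) t)
      * (H (lam i + lam j) t ^+ 2 / (H (lam i + lam i) t * H (lam j + lam j) t)).
    rewrite /x; field; apply/andP; split; exact: lt0r_neq0.
  rewrite si sj !mul1r ler_pdivrMr ?mul1r // mulr_gt0 //.
rewrite x0 /=; nra.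
Qed.

Lemma diff_entry (lam0 : forall i, 0 < lam i) (t0 : 0 < t) (a b : 'M[R]_m) i j :
  `|(atilde lam a t - atilde lam b t) i j| <= `|(a - b) i j|.
Proof.
rewrite mxE [X in _ + X]mxE !at_entry [X in _ <= `|X|]mxE [X in _ <= `|_ + X|]mxE.
have -> : s i * (a i j * H (lam i + lam j) t) * s j - s i * (b i j * H (lam i + lam j) t) * s j
   = (s i * H (lam i + lam j) t * s j) * (a i j - b i j) by ring.
have /andP[f0 f1] := factor_le1 lam0 t0 i j.
rewrite normrM (ger0_norm f0) -[X in _ <= X]mul1r ler_wpM2r //.
Qed.

Lemma lowerb (lam0 : forall i, 0 < lam i) (t0 : 0 < t) (L0 L1 : R) (a : 'M[R]_m) :
  bounded_spd L0 L1 a ->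
  forall v, L0 * inner v v <= inner v (atilde lam a t *m v).
Proof.
move=> [_ ha] v.
have hA : forall y : 'I_m -> R, L0 * \sum_k y k ^+ 2 <= \sum_k \sum_l y k * y l * a k l.
  move=> y; have := (ha (\col_k y k)).1; rewrite /inner.
  congr (_ * _ <= _).
    by apply: eq_bigr => k _; rewrite !mxE expr2.
  apply: eq_bigr => k _; rewrite !mxE mulr_sumr; apply: eq_bigr => l _; rewrite !mxE; ring.
have := @core R m lam a L0 (fun k => s k * v k 0) t lam0 (ltW t0) hA.
congr (_ * _ <= _).
  rewrite /inner; apply: eq_bigr => k _.
  by rewrite exprMn mulrAC s_sq // mul1r expr2.
rewrite /inner; apply: eq_bigr => k _; rewrite mxE mulr_sumr; apply: eq_bigr => l _.
rewrite at_entry; ring.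
Qed.
End S4.

Lemma inv_diff (R : realType) (n : nat) (A B : 'M[R]_n) :
  A \in unitmx -> B \in unitmx ->
  invmx A - invmx B = invmx A *m (B - A) *m invmx B.
Proof.
move=> uA uB.
rewrite mulmxBr mulmxBl -(mulmxA (invmx A) B) mulmxV // mulmx1 mulVmx // mul1mx.
by []. Qed.

Theorem lemma4p5 (R : realType) (m : nat) (lam : 'I_m -> R) (L0 L1 : R)
    (a b : 'M[R]_m) :
  (1 <= m)%N ->
  (forall i, 0 < lam i) ->
  (forall i j : 'I_m, (i <= j)%N -> lam i <= lam j) ->
  0 < L0 -> L0 <= L1 ->
  bounded_spd L0 L1 a -> bounded_spd L0 L1 b ->
  forall t : R, 0 < t ->
  [/\ opnorm (atilde lam a t - atilde lam b t)
        <= snorm (atilde lam a t - atilde lam b t),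
      snorm (atilde lam a t - atilde lam b t) <= snorm (a - b),
      opnorm (Atilde lam a t - Atilde lam b t) <= L0 ^- 2 * snorm (a - b)
    & forall w w' : 'cV[R]_m,
        `| inner w ((Atilde lam a t - Atilde lam b t) *m w') |
          <= L0 ^- 2 * enorm w * enorm w' * snorm (a - b)].
Proof.
move=> _ lam0 _ L00 _ ha hb t t0.
set sa := atilde lam a t; set sb := atilde lam b t.
have la := @lowerb R m lam t lam0 t0 L0 L1 a ha; have lb := @lowerb R m lam t lam0 t0 L0 L1 b hb.
have ua : sa \in unitmx := @coerc_unit R m sa L0 L00 la.
have ub : sb \in unitmx := @coerc_unit R m sb L0 L00 lb.
have c2 : snorm (sa - sb) <= snorm (a - b).
  by apply: snorm_mono => i j; apply: (@diff_entry R m lam t lam0 t0).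
have c2' : snorm (sb - sa) <= snorm (a - b).
  apply: (le_trans _ c2); apply: snorm_mono => i j.
  by rewrite -opprB mxE normrN.
have S0 : 0 <= snorm (a - b) := snorm_ge0 _ _ _.
have eB : L0 ^- 2 = L0^-1 * L0^-1 by rewrite -expr2 exprVn.
have iL0 : 0 <= L0^-1 by rewrite invr_ge0 ltW.
have Dv : forall v, enorm ((Atilde lam a t - Atilde lam b t) *m v)
                    <= L0 ^- 2 * snorm (a - b) * enorm v.
  move=> v; rewrite /Atilde -/sa -/sb inv_diff // -!mulmxA.
  apply: (le_trans (@coerc_inv R m sa L0 _ L00 la)).
  rewrite eB -!mulrA; apply: ler_wpM2l => //.
  apply: (le_trans (schur _ _ _ _)).
  rewrite mulrCA; apply: ler_pM => //.
  - exact: snorm_ge0.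
  - exact: enorm_ge0.
  - exact: (@coerc_inv R m sb L0 _ L00 lb).
split => //.
- apply: opnorm_le; first exact: snorm_ge0.
  by move=> v; apply: schur.
- apply: opnorm_le; first by rewrite mulr_ge0 // eB mulr_ge0.
  exact: Dv.
- move=> w w'.
  apply: (le_trans (inner_cs _ _ _ _)).
  have -> : L0 ^- 2 * enorm w * enorm w' * snorm (a - b)
          = enorm w * (L0 ^- 2 * snorm (a - b) * enorm w') by ring.
  by apply: ler_wpM2l; [exact: enorm_ge0 | exact: Dv].
Qed.
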